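(* The SRT$_{\mathsf{AD}}$-definable transformations are closed under union, intersection and composition, and the SRT$_{\mathsf{AU}}$-definable transformations are closed under union, intersection and composition. (Here, for a class $\mathcal{C}$ of transducers, closure means: for $\mathcal{C}$-transducers $\mathcal{S}_1,\mathcal{S}_2$ over a common linear group and compatible label sets, the union, intersection (same signature) and composition $[\![\mathcal{S}_1]\!]\cdot[\![\mathcal{S}_2]\!]$ are each equal to $[\![\mathcal{S}]\!]$ for some $\mathcal{C}$-transducer $\mathcal{S}$.)
   Context: A linear group is a triple $\mathbf{G}=(D,\leq,+)$ where $D$ is an infinite set, $\leq$ is a total order on $D$, and $(D,+)$ is a group with identity $0$. For finite label sets $\Sigma,\Gamma$, a $(\Sigma,\Gamma,\mathbf{G})$-streaming register transducer (SRT) is a tuple $\mathcal{S}=(Q,q_0,k,R_0,\Delta)$: $Q$ finite set of states, $q_0\in Q$, $k\in\mathbb{N}$ registers, initial values $R_0\in D^k$, and transitions $\Delta\subseteq Q\times\Sigma\times\{>,=,<\}^k\times\{\mathsf{old},\mathsf{new},\mathsf{add}\}^k\times\{1,\dots,k\}\times\Gamma\times Q$. A transition $(q,\sigma,l,m,u,\gamma,q')$ enables the step $(q,R)\xrightarrow[(\gamma,d')]{(\sigma,d)}(q',R')$ iff (1) for every $i$, $d>R[i]$, $d=R[i]$ or $d<R[i]$ according as $l[i]$ is $>$, $=$, $<$; (2) $R'[i]=R[i]$, $d$, or $R[i]+d$ according as $m[i]$ is $\mathsf{old}$, $\mathsf{new}$, $\mathsf{add}$; (3) $d'=R'[u]$.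 A run over $s\in(\Sigma\times D)^*$ of length $n$ generating $t\in(\Gamma\times D)^*$ is a sequence of $n$ enabled steps from $(q_0,R_0)$ reading $s[i]$ and emitting $t[i]$. $s\otimes t$ is the word with $i$-th letter $(s[i],t[i])$; $[\![\mathcal{S}]\!]=\{s\otimes t:\text{there is a run over }s\text{ generating }t\}$. SRT$_{\mathsf{A}}$ (add-free): all update vectors lie in $\{\mathsf{old},\mathsf{new}\}^k$. SRT$_{\mathsf{AD}}$: add-free and the order $\leq$ of $\mathbf{G}$ is dense (for $a<b$ there is $c$ with $a<c<b$). SRT$_{\mathsf{AU}}$: add-free and $R_0=(0,\dots,0)$. Composition: for $\mathcal{T}_1$ over $(\Sigma\times D)\times(\Gamma\times D)$ and $\mathcal{T}_2$ over $(\Gamma\times D)\times(\Theta\times D)$, $\mathcal{T}_1\cdot\mathcal{T}_2$ is the set of $s_1\otimes s_2$ ($s_1\in(\Sigma\times D)^*$, $s_2\in(\Theta\times D)^*$) such that some $s_3\in(\Gamma\times D)^*$ has $s_1\otimes s_3\in\mathcal{T}_1$ and $s_3\otimes s_2\in\mathcal{T}_2$. *)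

(* Defs.v *)
From mathcomp Require Import all_boot.
Set Implicit Arguments. Unset Strict Implicit. Unset Printing Implicit Defensive.

Record linear_group := LinearGroup {
  LG_carrier :> Type;
  LG_le : LG_carrier -> LG_carrier -> Prop;
  LG_add : LG_carrier -> LG_carrier -> LG_carrier;
  LG_zero : LG_carrier;
  LG_opp : LG_carrier -> LG_carrier;
  LG_le_refl : forall x, LG_le x x;
  LG_le_antisym : forall x y, LG_le x y -> LG_le y x -> x = y;
  LG_le_trans : forall x y z, LG_le x y -> LG_le y z -> LG_le x z;
  LG_le_total : forall x y, LG_le x y \/ LG_le y x;
  LG_addA : forall x y z, LG_add x (LG_add y z) = LG_add (LG_add x y) z;
  LG_add0x : forall x, LG_add LG_zero x = x;
  LG_addx0 : forall x, LG_add x LG_zero = x;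
  LG_addNx : forall x, LG_add (LG_opp x) x = LG_zero;
  LG_addxN : forall x, LG_add x (LG_opp x) = LG_zero;
  LG_infinite : exists f : nat -> LG_carrier, injective f
}.

Definition LG_lt (G : linear_group) (x y : G) : Prop := LG_le x y /\ x <> y.

Definition dense (G : linear_group) : Prop :=
  forall a b : G, LG_lt a b -> exists c : G, LG_lt a c /\ LG_lt c b.

Inductive cmp := CGt | CEq | CLt.
Inductive upd := UOld | UNew | UAdd.

(* A (Sig,Gam,G)-streaming register transducer; registers indexed by 'I_k
   (i.e. 0..k-1 instead of 1..k). *)
Record SRT (G : linear_group) (Sig Gam : finType) := MkSRT {
  srt_Q : finType;
  srt_q0 : srt_Q;
  srt_k : nat;
  srt_R0 : 'I_srt_k -> G;
  srt_Delta : srt_Q -> Sig -> ('I_srt_k -> cmp) -> ('I_srt_k -> upd) ->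
              'I_srt_k -> Gam -> srt_Q -> Prop
}.

Definition cmp_ok (G : linear_group) (c : cmp) (d r : G) : Prop :=
  match c with
  | CGt => LG_lt r d
  | CEq => d = r
  | CLt => LG_lt d r
  end.

Definition upd_val (G : linear_group) (m : upd) (r d : G) : G :=
  match m with
  | UOld => r
  | UNew => d
  | UAdd => LG_add r d
  end.

Definition step (G : linear_group) (Sig Gam : finType) (S : SRT G Sig Gam)
  (q : srt_Q S) (R : 'I_(srt_k S) -> G) (sig : Sig) (d : G)
  (gam : Gam) (d' : G) (q' : srt_Q S) (R' : 'I_(srt_k S) -> G) : Prop :=
  exists (l : 'I_(srt_k S) -> cmp) (m : 'I_(srt_k S) -> upd) (u : 'I_(srt_k S)),
    @srt_Delta G Sig Gam S q sig l m u gam q' /\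
    (forall i, cmp_ok (l i) d (R i)) /\
    (forall i, R' i = upd_val (m i) (R i) d) /\
    d' = R' u.

Fixpoint runs_from (G : linear_group) (Sig Gam : finType) (S : SRT G Sig Gam)
  (q : srt_Q S) (R : 'I_(srt_k S) -> G) (w : seq ((Sig * G) * (Gam * G))) : Prop :=
  match w with
  | [::] => True
  | ((sig, d), (gam, d')) :: w' =>
      exists q' R', @step G Sig Gam S q R sig d gam d' q' R' /\ @runs_from G Sig Gam S q' R' w'
  end.

(* [[S]] : a word of pairs s (x) t is in the semantics iff there is a run
   over s = unzip1 w generating t = unzip2 w from (q0,R0). *)
Definition sem (G : linear_group) (Sig Gam : finType) (S : SRT G Sig Gam)
  (w : seq ((Sig * G) * (Gam * G))) : Prop :=
  @runs_from G Sig Gam S (@srt_q0 G Sig Gam S) (@srt_R0 G Sig Gam S) w.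

Definition compose (G : linear_group) (Sig Gam The : finType)
  (T1 : seq ((Sig * G) * (Gam * G)) -> Prop)
  (T2 : seq ((Gam * G) * (The * G)) -> Prop)
  (w : seq ((Sig * G) * (The * G))) : Prop :=
  exists s3 : seq (Gam * G),
    size s3 = size w /\ T1 (zip (unzip1 w) s3) /\ T2 (zip s3 (unzip2 w)).

Definition add_free (G : linear_group) (Sig Gam : finType) (S : SRT G Sig Gam) :=
  forall q a l m u g q', @srt_Delta G Sig Gam S q a l m u g q' -> forall i, m i <> UAdd.

Definition SRT_class := forall (G : linear_group) (Sig Gam : finType), SRT G Sig Gam -> Prop.

Definition is_SRT_AD : SRT_class := fun G Sig Gam S => add_free S /\ dense G.
Definition is_SRT_AU : SRT_class :=
  fun G Sig Gam S => add_free S /\ forall i, @srt_R0 G Sig Gam S i = LG_zero G.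

Definition closed_union (C : SRT_class) : Prop :=
  forall (G : linear_group) (Sig Gam : finType) (S1 S2 : SRT G Sig Gam),
    C G Sig Gam S1 -> C G Sig Gam S2 ->
    exists S : SRT G Sig Gam, C G Sig Gam S /\
      forall w, sem S w <-> (sem S1 w \/ sem S2 w).

Definition closed_inter (C : SRT_class) : Prop :=
  forall (G : linear_group) (Sig Gam : finType) (S1 S2 : SRT G Sig Gam),
    C G Sig Gam S1 -> C G Sig Gam S2 ->
    exists S : SRT G Sig Gam, C G Sig Gam S /\
      forall w, sem S w <-> (sem S1 w /\ sem S2 w).

Definition closed_comp (C : SRT_class) : Prop :=
  forall (G : linear_group) (Sig Gam The : finType)
         (S1 : SRT G Sig Gam) (S2 : SRT G Gam The),
    C G Sig Gam S1 -> C G Gam The S2 ->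
    exists S : SRT G Sig The, C G Sig The S /\
      forall w, sem S w <-> compose (sem S1) (sem S2) w.

(* Main.v *)
Require Import Defs.
From mathcomp Require Import all_boot.
From Stdlib Require Import FunctionalExtensionality ClassicalEpsilon.
Set Implicit Arguments. Unset Strict Implicit. Unset Printing Implicit Defensive.

Section Basics.
Variable G : linear_group.

Definition bdec (P : Prop) : bool := if excluded_middle_informative P then true else false.
Lemma bdecP P : bdec P = true <-> P.
Proof. by rewrite /bdec; case: excluded_middle_informative. Qed.

Lemma bool_iff (b1 b2 : bool) (P : Prop) : (b1 = true <-> P) -> (b2 = true <-> P) -> b1 = b2.
Proof.
case: b1; case: b2 => // H1 H2.
- by apply/esym/H2/H1.
- by apply/H1/H2.
Qed.

Definition ext (I : Type) (R : I -> G) (d : G) (x : option I) : G :=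
  if x is Some i then R i else d.

Definition gdof (I : Type) (R : I -> G) (d : G) : option I -> option I -> bool :=
  fun x y => bdec (LG_le (ext R d x) (ext R d y)).

Lemma gdofP I (R : I -> G) d x y : gdof R d x y = true <-> LG_le (ext R d x) (ext R d y).
Proof. exact: bdecP. Qed.

Lemma gd_map (I J : Type) (gd : option I -> option I -> bool) (R : I -> G) d
  (R' : J -> G) d' (f : option J -> option I) :
  (forall x y, gd x y = true <-> LG_le (ext R d x) (ext R d y)) ->
  (forall x, ext R d (f x) = ext R' d' x) ->
  forall x y, gd (f x) (f y) = true <-> LG_le (ext R' d' x) (ext R' d' y).
Proof. by move=> H E x y; rewrite -!E. Qed.

Lemma gd_eq (I J : Type) (gd : option I -> option I -> bool) (R : I -> G) d
  (gd1 : option J -> option J -> bool) (R' : J -> G) d' (f : option J -> option I) :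
  (forall x y, gd x y = true <-> LG_le (ext R d x) (ext R d y)) ->
  (forall x y, gd1 x y = true <-> LG_le (ext R' d' x) (ext R' d' y)) ->
  (forall x, ext R d (f x) = ext R' d' x) ->
  (fun x y => gd (f x) (f y)) = gd1.
Proof.
move=> H H1 E; apply: functional_extensionality => x; apply: functional_extensionality => y.
apply: bool_iff; [exact: (gd_map H E x y) | exact: H1].
Qed.

Lemma lt_irr (x : G) : ~ LG_lt x x. Proof. by case. Qed.

End Basics.

Record GM (G : linear_group) (Sig Gam : finType) := MkGM {
  gm_Q : finType;
  gm_q0 : gm_Q;
  gm_I : finType;
  gm_R0 : gm_I -> G;
  gm_Delta : gm_Q -> Sig -> (option gm_I -> option gm_I -> bool) ->
             (gm_I -> option gm_I) -> gm_I -> Gam -> gm_Q -> Prop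
}.

Section GMsem.
Variables (G : linear_group) (Sig Gam : finType) (M : GM G Sig Gam).

Definition gstep (q : gm_Q M) (R : gm_I M -> G) (a : Sig) (d : G) (g : Gam) (d' : G)
  (q' : gm_Q M) (R' : gm_I M -> G) : Prop :=
  exists gd src u, gm_Delta q a gd src u g q' /\
    (forall x y, gd x y = true <-> LG_le (ext R d x) (ext R d y)) /\
    (forall i, R' i = ext R d (src i)) /\ d' = R' u.

Fixpoint gruns (q : gm_Q M) (R : gm_I M -> G) (w : seq ((Sig * G) * (Gam * G))) : Prop :=
  match w with
  | [::] => True
  | ((a, d), (g, d')) :: w' => exists q' R', gstep q R a d g d' q' R' /\ gruns q' R' w'
  end.

Definition gsem w := gruns (gm_q0 M) (@gm_R0 _ _ _ M) w.
End GMsem.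

Section Emb.
Variables (G : linear_group) (Sig Gam : finType) (S : SRT G Sig Gam).

Definition cmpb (b1 b2 : bool) : cmp :=
  if b1 then (if b2 then CEq else CLt) else CGt.

Lemma cmpb_ok (b1 b2 : bool) (d r : G) :
  (b1 = true <-> LG_le d r) -> (b2 = true <-> LG_le r d) -> cmp_ok (cmpb b1 b2) d r.
Proof.
move=> H1 H2; rewrite /cmpb.
case E1: b1; case E2: b2 => /=.
- by apply: LG_le_antisym; [apply/H1 | apply/H2].
- split; first by apply/H1.
  by move=> Edr; move: E2; subst d; have /H2 -> := LG_le_refl r.
- split.
  + by case: (LG_le_total r d) => // /H1; rewrite E1.
  + by move=> Erd; move: E1; subst d; have /H1 -> := LG_le_refl r.
- split.
  + by case: (LG_le_total r d) => // /H1; rewrite E1.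
  + by move=> Erd; move: E1; subst d; have /H1 -> := LG_le_refl r.
Qed.

Lemma cmp_okb (c : cmp) (b1 b2 : bool) (d r : G) :
  (b1 = true <-> LG_le d r) -> (b2 = true <-> LG_le r d) -> cmp_ok c d r -> c = cmpb b1 b2.
Proof.
move=> H1 H2; case: c => /=.
- move=> [Hle Hne]; case E1: b1; last by [].
  by have := proj1 H1 E1 => Hdr; case: Hne; apply: LG_le_antisym.
- move=> Hdr; subst d; have /H1 -> := LG_le_refl r; by have /H2 -> := LG_le_refl r.
- move=> [Hle Hne]; have /H1 -> := Hle; case E2: b2 => //.
  by case: Hne; apply: LG_le_antisym => //; apply/H2.
Qed.

Definition gcmp (I : Type) (gd : option I -> option I -> bool) (i : I) : cmp :=
  cmpb (gd None (Some i)) (gd (Some i) None).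

Definition emb : GM G Sig Gam :=
  @MkGM G Sig Gam (srt_Q S) (srt_q0 S) ('I_(srt_k S) : finType) (@srt_R0 _ _ _ S)
    (fun q a gd src u g q' => exists l m, @srt_Delta _ _ _ S q a l m u g q' /\
        (forall i, l i = gcmp gd i) /\
        (forall i, src i = if m i is UNew then None else Some i)).

Hypothesis af : add_free S.

Lemma emb_runs w : forall q R, runs_from q R w <-> gruns (M:=emb) q R w.
Proof.
elim: w => [//|[[a d] [g d']] w IH] q R /=; split.
- move=> [q' [R' [[l [m [u [HD [Hl [HR Hd]]]]]] Hr]]].
  exists q', R'; split; last by apply/IH.
  exists (gdof R d), (fun i => if m i is UNew then None else Some i), u; split.
    exists l, m; split=> //; split=> // i; rewrite /gcmp.
    by apply: (cmp_okb _ _ (Hl i)); apply: gdofP.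
  split; first exact: gdofP.
  split=> //.
  move=> i; rewrite HR; have := @af _ _ _ _ _ _ _ HD i; by case: (m i).
- move=> [q' [R' [[gd [src [u [[l [m [HD [Hl Hs]]]] [Hgd [HR Hd]]]]]] Hr]]].
  exists q', R'; split; last by apply/IH.
  exists l, m, u; split=> //; split.
    move=> i; rewrite Hl; apply: cmpb_ok; [exact: Hgd | exact: Hgd].
  split=> // i; rewrite HR Hs; have := @af _ _ _ _ _ _ _ HD i; by case: (m i).
Qed.

Lemma emb_sem w : sem S w <-> gsem emb w.
Proof. exact: emb_runs. Qed.
End Emb.

Section Sim.
Variables (G : linear_group) (Sig Gam : finType) (M : GM G Sig Gam).
Local Notation I := (gm_I M).
Local Notation P := (#|I|.+1).
Local Notation Lmat := {ffun 'I_P * 'I_P -> bool}.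

Definition gval (L : Lmat) (l : 'I_P -> cmp) (x y : option 'I_P) : bool :=
  match x, y with
  | Some p, Some q => L (p, q)
  | None, Some q => if l q is CGt then false else true
  | Some p, None => if l p is CLt then false else true
  | None, None => true
  end.

Definition srcp (m : 'I_P -> upd) (p : 'I_P) : option 'I_P :=
  if m p is UNew then None else Some p.

Definition ptr0 : {ffun I -> 'I_P} := [ffun i => widen_ord (leqnSn _) (enum_rank i)].

Lemma ptr0_inj : injective ptr0.
Proof.
move=> i j; rewrite !ffunE => /(congr1 val) /= /val_inj; exact: enum_rank_inj.
Qed.

Definition simR0 (p : 'I_P) : G :=
  if [pick i | ptr0 i == p] is Some i then @gm_R0 _ _ _ M i else LG_zero G.

Lemma simR0_ptr i : simR0 (ptr0 i) = @gm_R0 _ _ _ M i.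
Proof.
rewrite /simR0; case: pickP => [j /eqP /ptr0_inj -> //|].
by move=> /(_ i); rewrite eqxx.
Qed.

Definition L0 : Lmat := [ffun pq => bdec (LG_le (simR0 pq.1) (simR0 pq.2))].

Definition simQ : finType := (gm_Q M * {ffun I -> 'I_P} * Lmat)%type.

Definition simDelta (s : simQ) (a : Sig) (l : 'I_P -> cmp) (m : 'I_P -> upd) (u : 'I_P)
   (g : Gam) (s' : simQ) : Prop :=
  exists gd src ul, gm_Delta s.1.1 a gd src ul g s'.1.1 /\
   (forall p, m p <> UAdd) /\
   (forall x y, gd x y = gval s.2 l (omap s.1.2 x) (omap s.1.2 y)) /\
   (forall i, match src i with
              | None => m (s'.1.2 i) = UNew
              | Some j => s'.1.2 i = s.1.2 j /\ m (s.1.2 j) = UOld end) /\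
   u = s'.1.2 ul /\
   (forall p q, s'.2 (p, q) = gval s.2 l (srcp m p) (srcp m q)).

Definition sim : SRT G Sig Gam :=
  @MkSRT G Sig Gam simQ (gm_q0 M, ptr0, L0) P simR0 simDelta.

Definition Lok (L : Lmat) (R : 'I_P -> G) :=
  forall p q, L (p, q) = true <-> LG_le (R p) (R q).

Lemma gval_ok (L : Lmat) (R : 'I_P -> G) (l : 'I_P -> cmp) (d : G) : Lok L R -> (forall p, cmp_ok (l p) d (R p)) ->
  forall x y, gval L l x y = true <-> LG_le (ext R d x) (ext R d y).
Proof.
move=> HL Hl [p|] [q|] /=.
- exact: HL.
- have := Hl p; case: (l p) => /= H.
  + by split=> // _; case: H.
  + by subst d; split=> // _; apply: LG_le_refl.
  + split=> // Hle; case: H => H1 H2; case: H2; exact: LG_le_antisym.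
- have := Hl q; case: (l q) => /= H.
  + split=> // Hle; case: H => H1 H2; case: H2; exact: LG_le_antisym.
  + by subst d; split=> // _; apply: LG_le_refl.
  + by split=> // _; case: H.
- by split=> // _; apply: LG_le_refl.
Qed.

Lemma upd_srcp (m : 'I_P -> upd) (R : 'I_P -> G) (d : G) p : m p <> UAdd ->
  upd_val (m p) (R p) d = ext R d (srcp m p).
Proof. by rewrite /srcp; case: (m p). Qed.

Lemma ext_omap (ptr : {ffun I -> 'I_P}) (R : 'I_P -> G) (Rl : I -> G) d :
  (forall i, Rl i = R (ptr i)) -> forall x, ext R d (omap ptr x) = ext Rl d x.
Proof. by move=> H [i|] //=; rewrite H. Qed.

Definition cmpof (d r : G) : cmp :=
  if bdec (d = r) then CEq else if bdec (LG_le d r) then CLt else CGt.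

Lemma cmpof_ok d r : cmp_ok (cmpof d r) d r.
Proof.
rewrite /cmpof; case E1: (bdec (d = r)); first exact/bdecP.
have Hne : d <> r by move=> H; have := proj2 (bdecP (d = r)) H; rewrite E1.
case E2: (bdec (LG_le d r)) => /=.
- by split=> //; apply/bdecP.
- split=> //; last by move=> H; apply: Hne.
  case: (LG_le_total r d) => // H; have := proj2 (bdecP _) H; by rewrite E2.
Qed.

Lemma free_reg (ptr : {ffun I -> 'I_P}) : exists f : 'I_P, f \notin codom ptr.
Proof.
case: (pickP [pred f : 'I_P | f \notin codom ptr]) => [f Hf|H]; first by exists f.
have : #|'I_P| <= #|codom ptr|.
  apply: subset_leq_card; apply/subsetP => x _; move: (H x) => /= /negbFE //.
by rewrite card_ord => /leq_trans /(_ (card_size _)); rewrite size_codom ltnn.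
Qed.

Lemma sim_runs w : forall (s : simQ) R Rl, Lok s.2 R -> (forall i, Rl i = R (s.1.2 i)) ->
  (runs_from (S:=sim) s R w <-> gruns (M:=M) s.1.1 Rl w).
Proof.
elim: w => [//|[[a d] [g d']] w IH] s R Rl HL HRl /=; split.
- move=> [s' [R' [[l [m [u [HD [Hl [HR Hd]]]]]] Hr]]].
  case: HD => gd [src [ul [HD [Haf [Hgd [Hsrc [Hu HL']]]]]]].
  have HR'ptr : forall i, R' (s'.1.2 i) = ext Rl d (src i).
    move=> i; have := Hsrc i; case: (src i) => [j [-> Hm]|Hm] /=.
      by rewrite HR Hm /= HRl.
    by rewrite HR Hm.
  exists s'.1.1, (fun i => R' (s'.1.2 i)); split; last first.
    have H1 : Lok s'.2 R'.
      move=> p q; rewrite HL' !HR !upd_srcp //; exact: gval_ok.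
    by apply/(IH s' R' _ H1).
  exists gd, src, ul; split=> //; split.
    move=> x y; rewrite Hgd -!(ext_omap d HRl).
    exact: gval_ok.
  split=> //; by rewrite Hd Hu.
- move=> [q' [Rl' [[gd [src [ul [HD [Hgd [HRl' Hd]]]]]] Hr]]].
  have [f Hf] := free_reg s.1.2.
  pose ptr' : {ffun I -> 'I_P} := [ffun i => if src i is Some j then s.1.2 j else f].
  pose m : 'I_P -> upd := fun p => if p == f then UNew else UOld.
  pose l : 'I_P -> cmp := fun p => cmpof d (R p).
  have Hl : forall p, cmp_ok (l p) d (R p) by move=> p; exact: cmpof_ok.
  pose L' : Lmat := [ffun pq => gval s.2 l (srcp m pq.1) (srcp m pq.2)].
  pose R' := fun p => upd_val (m p) (R p) d.
  have Haf : forall p, m p <> UAdd by move=> p; rewrite /m; case: (p == f).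
  have Hnf : forall j, (s.1.2 j == f) = false.
    move=> j; apply/negbTE; apply: contraNneq Hf => <-; exact: codom_f.
  have HR'ptr : forall i, R' (ptr' i) = ext Rl d (src i).
    move=> i; rewrite /R' /m ffunE; case: (src i) => [j|] /=.
      by rewrite Hnf /= HRl.
    by rewrite eqxx.
  exists (q', ptr', L'), R'; split; last first.
    have H1 : Lok L' R'.
      move=> p q; rewrite ffunE /= /R' !upd_srcp //; exact: gval_ok.
    have H2 : forall i, Rl' i = R' (ptr' i) by move=> i; rewrite HRl' HR'ptr.
    by apply/(IH (q', ptr', L') R' Rl' H1 H2).
  exists l, m, (ptr' ul); split; last first.
    split=> //; split=> //; by rewrite Hd HRl' HR'ptr.
  exists gd, src, ul; split=> //; split=> //; split.
    move=> x y; apply: bool_iff; first exact: Hgd.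
    rewrite -!(ext_omap d HRl); exact: gval_ok.
  split; last by split=> // p q; rewrite ffunE.
  move=> i /=; rewrite /ptr' ffunE /m; case: (src i) => [j|] /=.
    by rewrite Hnf.
  by rewrite eqxx.
Qed.

Lemma sim_sem w : sem sim w <-> gsem M w.
Proof.
apply: (@sim_runs w (gm_q0 M, ptr0, L0) simR0 (@gm_R0 _ _ _ M)) => /=.
- by move=> p q; rewrite ffunE; apply: bdecP.
- by move=> i; rewrite simR0_ptr.
Qed.

Lemma sim_af : add_free sim.
Proof. by move=> q a l m u g q' [gd [src [ul [_ [H _]]]]]. Qed.

Lemma sim_R0 : (forall i, @gm_R0 _ _ _ M i = LG_zero G) -> forall p, @srt_R0 _ _ _ sim p = LG_zero G.
Proof. by move=> H p /=; rewrite /simR0; case: pickP => // i _; rewrite H. Qed.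

End Sim.

Section Prod.
Variables (G : linear_group).

Definition rl (I1 I2 : Type) (gd : option (I1 + I2) -> option (I1 + I2) -> bool) :=
  fun x y => gd (omap inl x) (omap inl y).
Definition rr (I1 I2 : Type) (gd : option (I1 + I2) -> option (I1 + I2) -> bool) :=
  fun x y => gd (omap inr x) (omap inr y).

Definition Rsum (I1 I2 : Type) (R1 : I1 -> G) (R2 : I2 -> G) (i : I1 + I2) : G :=
  match i with inl j => R1 j | inr j => R2 j end.

Lemma ext_inl (I1 I2 : Type) (R : I1 + I2 -> G) d x :
  ext R d (omap inl x) = ext (fun i => R (inl i)) d x.
Proof. by case: x. Qed.
Lemma ext_inr (I1 I2 : Type) (R : I1 + I2 -> G) d x :
  ext R d (omap inr x) = ext (fun i => R (inr i)) d x.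
Proof. by case: x. Qed.

Section Union.
Variables (Sig Gam : finType) (M1 M2 : GM G Sig Gam).
Local Notation I := ((gm_I M1 + gm_I M2)%type : finType).
Local Notation Q := ((option (gm_Q M1 + gm_Q M2))%type : finType).

Definition side1 (q1 : gm_Q M1) (a : Sig) (gd : option I -> option I -> bool)
  (src : I -> option I) (u : I) (g : Gam) (q' : Q) : Prop :=
  exists src1 u1 q1', q' = Some (inl q1') /\ gm_Delta q1 a (rl gd) src1 u1 g q1' /\
    (forall i, src (inl i) = omap inl (src1 i)) /\ u = inl u1.
Definition side2 (q2 : gm_Q M2) (a : Sig) (gd : option I -> option I -> bool)
  (src : I -> option I) (u : I) (g : Gam) (q' : Q) : Prop :=
  exists src2 u2 q2', q' = Some (inr q2') /\ gm_Delta q2 a (rr gd) src2 u2 g q2' /\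
    (forall i, src (inr i) = omap inr (src2 i)) /\ u = inr u2.

Definition unionGM : GM G Sig Gam :=
  @MkGM G Sig Gam Q None I (Rsum (@gm_R0 _ _ _ M1) (@gm_R0 _ _ _ M2))
   (fun q a gd src u g q' => match q with
     | None => side1 (gm_q0 M1) a gd src u g q' \/ side2 (gm_q0 M2) a gd src u g q'
     | Some (inl q1) => side1 q1 a gd src u g q'
     | Some (inr q2) => side2 q2 a gd src u g q' end).

Lemma union1 w : forall q1 (R : I -> G),
  gruns (M:=unionGM) (Some (inl q1)) R w <-> gruns (M:=M1) q1 (fun i => R (inl i)) w.
Proof.
elim: w => [//|[[a d] [g d']] w IH] q1 R /=; split.
- move=> [q' [R' [[gd [src [u [[src1 [u1 [q1' [-> [HD [Hs ->]]]]]] [Hgd [HR Hd]]]]]] Hr]]].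
  exists q1', (fun i => R' (inl i)); split; last by apply/IH.
  exists (rl gd), src1, u1; split=> //; split.
    move=> x y; apply: (gd_map Hgd) => z; exact: ext_inl.
  split=> // i; by rewrite HR Hs ext_inl.
- move=> [q1' [R1' [[gd1 [src1 [u1 [HD [Hgd1 [HR1 Hd]]]]]] Hr]]].
  pose src : I -> option I := fun i => match i with
      inl j => omap inl (src1 j) | inr j => Some (inr j) end.
  pose R' := fun i => ext R d (src i).
  have ER : (fun i => R' (inl i)) = R1'.
    by apply: functional_extensionality => i; rewrite HR1 /R' /= ext_inl.
  exists (Some (inl q1')), R'; split; last by apply/IH; rewrite ER.
  exists (gdof R d), src, (inl u1); split.
    exists src1, u1, q1'; split=> //; split=> //.
    rewrite /rl (gd_eq (@gdofP _ _ R d) Hgd1) //; exact: ext_inl.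
  split; first exact: gdofP.
  split=> //; by rewrite Hd -ER.
Qed.

Lemma union2 w : forall q2 (R : I -> G),
  gruns (M:=unionGM) (Some (inr q2)) R w <-> gruns (M:=M2) q2 (fun i => R (inr i)) w.
Proof.
elim: w => [//|[[a d] [g d']] w IH] q2 R /=; split.
- move=> [q' [R' [[gd [src [u [[src2 [u2 [q2' [-> [HD [Hs ->]]]]]] [Hgd [HR Hd]]]]]] Hr]]].
  exists q2', (fun i => R' (inr i)); split; last by apply/IH.
  exists (rr gd), src2, u2; split=> //; split.
    move=> x y; apply: (gd_map Hgd) => z; exact: ext_inr.
  split=> // i; by rewrite HR Hs ext_inr.
- move=> [q2' [R2' [[gd2 [src2 [u2 [HD [Hgd2 [HR2 Hd]]]]]] Hr]]].
  pose src : I -> option I := fun i => match i with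
      inr j => omap inr (src2 j) | inl j => Some (inl j) end.
  pose R' := fun i => ext R d (src i).
  have ER : (fun i => R' (inr i)) = R2'.
    by apply: functional_extensionality => i; rewrite HR2 /R' /= ext_inr.
  exists (Some (inr q2')), R'; split; last by apply/IH; rewrite ER.
  exists (gdof R d), src, (inr u2); split.
    exists src2, u2, q2'; split=> //; split=> //.
    rewrite /rr (gd_eq (@gdofP _ _ R d) Hgd2) //; exact: ext_inr.
  split; first exact: gdofP.
  split=> //; by rewrite Hd -ER.
Qed.

Lemma union_sem w : gsem unionGM w <-> gsem M1 w \/ gsem M2 w.
Proof.
have E1 : gsem M1 w <-> gruns (M:=unionGM) (Some (inl (gm_q0 M1)))
   (Rsum (@gm_R0 _ _ _ M1) (@gm_R0 _ _ _ M2)) w by apply: iff_sym; apply: union1.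
have E2 : gsem M2 w <-> gruns (M:=unionGM) (Some (inr (gm_q0 M2)))
   (Rsum (@gm_R0 _ _ _ M1) (@gm_R0 _ _ _ M2)) w by apply: iff_sym; apply: union2.
rewrite E1 E2 /gsem.
move: E1 E2 => _ _.
case: w => [|[[a d] [g d']] w] /=; first by split=> //; left.
split.
- move=> [q' [R' [[gd [src [u [[H|H] Hrest]]]] Hr]]].
  + by left; exists q', R'; split=> //; exists gd, src, u.
  + by right; exists q', R'; split=> //; exists gd, src, u.
- case=> [[q' [R' [[gd [src [u [H Hrest]]]] Hr]]]|[q' [R' [[gd [src [u [H Hrest]]]] Hr]]]].
  + by exists q', R'; split=> //; exists gd, src, u; split=> //; left.
  + by exists q', R'; split=> //; exists gd, src, u; split=> //; right.
Qed.
End Union.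
End Prod.

Section Inter.
Variables (G : linear_group) (Sig Gam : finType) (M1 M2 : GM G Sig Gam).
Local Notation I := ((gm_I M1 + gm_I M2)%type : finType).
Local Notation Q := ((gm_Q M1 * gm_Q M2)%type : finType).

Definition interGM : GM G Sig Gam :=
  @MkGM G Sig Gam Q (gm_q0 M1, gm_q0 M2) I (Rsum (@gm_R0 _ _ _ M1) (@gm_R0 _ _ _ M2))
   (fun q a gd src u g q' => exists src1 u1 src2 u2,
      gm_Delta q.1 a (rl gd) src1 u1 g q'.1 /\ gm_Delta q.2 a (rr gd) src2 u2 g q'.2 /\
      (forall i, src (inl i) = omap inl (src1 i)) /\
      (forall i, src (inr i) = omap inr (src2 i)) /\ u = inl u1 /\
      gd (src (inl u1)) (src (inr u2)) /\ gd (src (inr u2)) (src (inl u1))).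

Lemma inter_runs w : forall (q : Q) (R : I -> G),
  gruns (M:=interGM) q R w <->
  gruns (M:=M1) q.1 (fun i => R (inl i)) w /\ gruns (M:=M2) q.2 (fun i => R (inr i)) w.
Proof.
elim: w => [//|[[a d] [g d']] w IH] q R /=; split.
- move=> [q' [R' [[gd [src [u [[src1 [u1 [src2 [u2 [HD1 [HD2 [Hs1 [Hs2 [-> [E1 E2]]]]]]]]]] [Hgd [HR Hd]]]]]] Hr]]].
  have [Hr1 Hr2] := proj1 (IH _ _) Hr.
  split.
  + exists q'.1, (fun i => R' (inl i)); split=> //.
    exists (rl gd), src1, u1; split=> //; split.
      move=> x y; apply: (gd_map Hgd) => z; exact: ext_inl.
    split=> // i; by rewrite HR Hs1 ext_inl.
  + exists q'.2, (fun i => R' (inr i)); split=> //.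
    exists (rr gd), src2, u2; split=> //; split.
      move=> x y; apply: (gd_map Hgd) => z; exact: ext_inr.
    split; first by move=> i; rewrite HR Hs2 ext_inr.
    rewrite Hd !HR; apply: LG_le_antisym; by apply/Hgd.
- move=> [[q1' [R1' [[gd1 [src1 [u1 [HD1 [Hgd1 [HR1 Hd1]]]]]] Hr1]]]
          [q2' [R2' [[gd2 [src2 [u2 [HD2 [Hgd2 [HR2 Hd2]]]]]] Hr2]]]].
  pose src : I -> option I := fun i => match i with
      inl j => omap inl (src1 j) | inr j => omap inr (src2 j) end.
  pose R' := fun i => ext R d (src i).
  have ER1 : (fun i => R' (inl i)) = R1'.
    by apply: functional_extensionality => i; rewrite HR1 /R' /= ext_inl.
  have ER2 : (fun i => R' (inr i)) = R2'.
    by apply: functional_extensionality => i; rewrite HR2 /R' /= ext_inr.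
  have Eq : R' (inl u1) = R' (inr u2).
    have E1' : R' (inl u1) = R1' u1 by rewrite -ER1.
    have E2' : R' (inr u2) = R2' u2 by rewrite -ER2.
    by rewrite E1' E2' -Hd1 -Hd2.
  exists (q1', q2'), R'; split; last by apply/IH; rewrite /= ER1 ER2.
  exists (gdof R d), src, (inl u1); split.
    exists src1, u1, src2, u2; split.
      rewrite /rl (gd_eq (@gdofP _ _ R d) Hgd1) //; exact: ext_inl.
    split.
      rewrite /rr (gd_eq (@gdofP _ _ R d) Hgd2) //; exact: ext_inr.
    do 3 (split=> //).
    split; apply/gdofP.
      by move: Eq; rewrite /R' => ->; apply: LG_le_refl.
    by move: Eq; rewrite /R' => ->; apply: LG_le_refl.
  split; first exact: gdofP.
  split=> //; rewrite Hd1; by rewrite -ER1.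
Qed.

Lemma inter_sem w : gsem interGM w <-> gsem M1 w /\ gsem M2 w.
Proof. exact: inter_runs. Qed.
End Inter.

Section Comp.
Variables (G : linear_group) (Sig Gam The : finType) (M1 : GM G Sig Gam) (M2 : GM G Gam The).
Local Notation I := ((gm_I M1 + gm_I M2)%type : finType).
Local Notation Q := ((gm_Q M1 * gm_Q M2)%type : finType).

Definition tr (src1 : gm_I M1 -> option (gm_I M1)) (u1 : gm_I M1) (x : option (gm_I M2)) : option I :=
  match x with None => omap inl (src1 u1) | Some j => Some (inr j) end.

Definition compGM : GM G Sig The :=
  @MkGM G Sig The Q (gm_q0 M1, gm_q0 M2) I (Rsum (@gm_R0 _ _ _ M1) (@gm_R0 _ _ _ M2))
   (fun q a gd src u t q' => exists src1 u1 g src2 u2,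
      gm_Delta q.1 a (rl gd) src1 u1 g q'.1 /\
      gm_Delta q.2 g (fun x y => gd (tr src1 u1 x) (tr src1 u1 y)) src2 u2 t q'.2 /\
      (forall i, src (inl i) = omap inl (src1 i)) /\
      (forall i, src (inr i) = tr src1 u1 (src2 i)) /\ u = inr u2).

Lemma comp_runs w : forall (q : Q) (R : I -> G),
  gruns (M:=compGM) q R w <->
  exists s3 : seq (Gam * G), size s3 = size w /\
    gruns (M:=M1) q.1 (fun i => R (inl i)) (zip (unzip1 w) s3) /\
    gruns (M:=M2) q.2 (fun i => R (inr i)) (zip s3 (unzip2 w)).
Proof.
elim: w => [|[[a d] [t d']] w IH] q R /=.
  by split=> // _; exists [::].
split.
- move=> [q' [R' [[gd [src [u [[src1 [u1 [g [src2 [u2 [HD1 [HD2 [Hs1 [Hs2 ->]]]]]]]]] [Hgd [HR Hd]]]]]] Hr]]].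
  have [s3 [Hsz [Hr1 Hr2]]] := proj1 (IH _ _) Hr.
  pose d3 := R' (inl u1).
  have Etr : forall x, ext R d (tr src1 u1 x) = ext (fun i => R (inr i)) d3 x.
    by case=> [j|] //=; rewrite /d3 HR Hs1.
  exists ((g, d3) :: s3); split; first by rewrite /= Hsz.
  split.
  + exists q'.1, (fun i => R' (inl i)); split=> //.
    exists (rl gd), src1, u1; split=> //; split.
      move=> x y; apply: (gd_map Hgd) => z; exact: ext_inl.
    split=> // i; by rewrite HR Hs1 ext_inl.
  + exists q'.2, (fun i => R' (inr i)); split=> //.
    exists (fun x y => gd (tr src1 u1 x) (tr src1 u1 y)), src2, u2; split=> //; split.
      move=> x y; exact: (gd_map Hgd Etr).
    split=> //; move=> i; by rewrite HR Hs2 Etr.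
- move=> [[|[g d3] s3] [Hsz [Hr1 Hr2]]] //=.
  move: Hr1 Hr2 => /= [q1' [R1' [[gd1 [src1 [u1 [HD1 [Hgd1 [HR1 Hd1]]]]]] Hr1]]]
          [q2' [R2' [[gd2 [src2 [u2 [HD2 [Hgd2 [HR2 Hd2]]]]]] Hr2]]].
  pose src : I -> option I := fun i => match i with
      inl j => omap inl (src1 j) | inr j => tr src1 u1 (src2 j) end.
  pose R' := fun i => ext R d (src i).
  have Etr : forall x, ext R d (tr src1 u1 x) = ext (fun i => R (inr i)) d3 x.
    by case=> [j|] //=; rewrite Hd1 HR1 ext_inl.
  have ER1 : (fun i => R' (inl i)) = R1'.
    by apply: functional_extensionality => i; rewrite HR1 /R' /= ext_inl.
  have ER2 : (fun i => R' (inr i)) = R2'.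
    by apply: functional_extensionality => i; rewrite HR2 /R' /= Etr.
  exists (q1', q2'), R'; split.
    exists (gdof R d), src, (inr u2); split.
      exists src1, u1, g, src2, u2; split.
        rewrite /rl (gd_eq (@gdofP _ _ R d) Hgd1) //; exact: ext_inl.
      split=> //.
      by rewrite (gd_eq (@gdofP _ _ R d) Hgd2 Etr).
    split; first exact: gdofP.
    split=> //; by rewrite Hd2 -ER2.
  apply/IH; exists s3; split; first by case: Hsz.
  by rewrite /= ER1 ER2.
Qed.

End Comp.

Lemma Rsum_zero (G : linear_group) (I1 I2 : Type) (R1 : I1 -> G) (R2 : I2 -> G) :
  (forall i, R1 i = LG_zero G) -> (forall i, R2 i = LG_zero G) ->
  forall i, Rsum R1 R2 i = LG_zero G.
Proof. by move=> H1 H2 [i|i] /=. Qed.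

Lemma comp_sem (G : linear_group) (Sig Gam The : finType)
  (S1 : SRT G Sig Gam) (S2 : SRT G Gam The) :
  add_free S1 -> add_free S2 ->
  forall w, gsem (compGM (emb S1) (emb S2)) w <-> compose (sem S1) (sem S2) w.
Proof.
move=> af1 af2 w; rewrite /gsem comp_runs /compose /=.
split; move=> [s3 [Hsz [H1 H2]]]; exists s3; split=> //; split.
- by apply/(emb_runs af1).
- by apply/(emb_runs af2).
- by apply/(emb_runs af1).
- by apply/(emb_runs af2).
Qed.

Theorem theorem3p20 :
  (closed_union is_SRT_AD /\ closed_inter is_SRT_AD /\ closed_comp is_SRT_AD) /\
  (closed_union is_SRT_AU /\ closed_inter is_SRT_AU /\ closed_comp is_SRT_AU).
Proof.
split; (split; [|split]).
- move=> G Sig Gam S1 S2 [af1 dn] [af2 _].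
  exists (sim (unionGM (emb S1) (emb S2))); split; first by split=> //; exact: sim_af.
  by move=> w; rewrite sim_sem union_sem -!emb_sem.
- move=> G Sig Gam S1 S2 [af1 dn] [af2 _].
  exists (sim (interGM (emb S1) (emb S2))); split; first by split=> //; exact: sim_af.
  by move=> w; rewrite sim_sem inter_sem -!emb_sem.
- move=> G Sig Gam The S1 S2 [af1 dn] [af2 _].
  exists (sim (compGM (emb S1) (emb S2))); split; first by split=> //; exact: sim_af.
  by move=> w; rewrite sim_sem comp_sem.
- move=> G Sig Gam S1 S2 [af1 z1] [af2 z2].
  exists (sim (unionGM (emb S1) (emb S2))); split.
    split; first exact: sim_af.
    by apply: sim_R0; apply: Rsum_zero.
  by move=> w; rewrite sim_sem union_sem -!emb_sem.
- move=> G Sig Gam S1 S2 [af1 z1] [af2 z2].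
  exists (sim (interGM (emb S1) (emb S2))); split.
    split; first exact: sim_af.
    by apply: sim_R0; apply: Rsum_zero.
  by move=> w; rewrite sim_sem inter_sem -!emb_sem.
- move=> G Sig Gam The S1 S2 [af1 z1] [af2 z2].
  exists (sim (compGM (emb S1) (emb S2))); split.
    split; first exact: sim_af.
    by apply: sim_R0; apply: Rsum_zero.
  by move=> w; rewrite sim_sem comp_sem.
Qed.
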